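(* Let $B$ be a Poisson algebra over a field $k$ of characteristic zero, $\alpha$ a Poisson derivation of $B$, and $A=B[x^{\pm1};\alpha]_p$. Assume that $\alpha$ extends to a derivation $\hat\alpha$ of $A$ with $\hat\alpha(x)=sx$ for some nonzero $s\in k$. Then every $\hat\alpha$-stable Poisson prime ideal of $A$ is induced from a Poisson prime ideal of $B$, i.e. has the form $QA=Q[x^{\pm1}]$ for a Poisson prime ideal $Q$ of $B$.
   Context: A Poisson derivation of a Poisson algebra $B$ is a $k$-linear map that is a derivation for both the multiplication and the Poisson bracket. $B[x^{\pm1};\alpha]_p$ denotes the Laurent polynomial ring $B[x^{\pm1}]$ with the unique Poisson bracket extending that of $B$ and satisfying $\{x,b\}=\alpha(b)x$ for $b\in B$. A Poisson prime ideal is a prime ideal $P$ with $\{A,P\}\subseteq P$. *)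

(* Defs.v *)
From HB Require Import structures.
From mathcomp Require Import all_boot all_order all_algebra ring_quotient.
Set Implicit Arguments. Unset Strict Implicit. Unset Printing Implicit Defensive.
Import GRing.Theory.
Local Open Scope ring_scope.

Definition poisson_bracket (k : fieldType) (R : comAlgType k)
    (br : R -> R -> R) : Prop :=
  [/\ (forall (c : k) (a b d : R), br (c *: a + b) d = c *: br a d + br b d),
      (forall (c : k) (a b d : R), br d (c *: a + b) = c *: br d a + br d b),
      (forall a b : R, br a b = - br b a),
      (forall a b c : R, br a (br b c) + br b (br c a) + br c (br a b) = 0) &
      (forall a b c : R, br a (b * c) = br a b * c + b * br a c)].

Definition derivation (k : fieldType) (R : comAlgType k) (d : R -> R) : Prop :=
  (forall (c : k) (a b : R), d (c *: a + b) = c *: d a + d b) /\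
  (forall a b : R, d (a * b) = d a * b + a * d b).

Definition poisson_derivation (k : fieldType) (R : comAlgType k)
    (br : R -> R -> R) (d : R -> R) : Prop :=
  derivation d /\ (forall a b : R, d (br a b) = br (d a) b + br a (d b)).

Definition prime_ideal (R : comNzRingType) (P : {pred R}) : Prop :=
  idealr_closed P /\ prime_idealr_closed P.

Definition poisson_prime (k : fieldType) (R : comAlgType k)
    (br : R -> R -> R) (P : {pred R}) : Prop :=
  prime_ideal P /\ (forall a u : R, u \in P -> br a u \in P).

(* (A, iota, x) is a Laurent polynomial ring B[x^{+-1}] over B:
   iota : B -> A is an injective k-algebra morphism, x is a unit of A,
   every element of A is x^-n * p(x) for some n and some p in B[X],
   and x is algebraically independent over iota(B). *)
Definition laurent_extension (k : fieldType) (B A : comAlgType k)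
    (iota : {lrmorphism B -> A}) (x : A) : Prop :=
  [/\ injective iota,
      (exists y : A, x * y = 1),
      (forall a : A, exists (n : nat) (p : {poly B}),
          a * x ^+ n = (map_poly iota p).[x]) &
      (forall p : {poly B}, (map_poly iota p).[x] = 0 -> p = 0)].

(* The Poisson bracket brA on A = B[x^{+-1}] is the one of B[x^{+-1};alpha]_p:
   it is a Poisson bracket, extends brB, and {x, b} = alpha(b) x. *)
Definition poisson_laurent (k : fieldType) (B A : comAlgType k)
    (brB : B -> B -> B) (alpha : B -> B)
    (iota : {lrmorphism B -> A}) (x : A) (brA : A -> A -> A) : Prop :=
  [/\ laurent_extension iota x,
      poisson_bracket brA,
      (forall b c : B, brA (iota b) (iota c) = iota (brB b c)) &
      (forall b : B, brA x (iota b) = iota (alpha b) * x)].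

(* The subset P of A equals the ideal Q[x^{+-1}] = QA induced from Q:
   P consists exactly of the Laurent polynomials x^-n p(x) with all
   coefficients of p in Q. *)
Definition induced_from (k : fieldType) (B A : comAlgType k)
    (iota : {lrmorphism B -> A}) (x : A) (P : {pred A}) (Q : {pred B}) : Prop :=
  forall a : A, a \in P <->
    exists (n : nat) (p : {poly B}),
      (forall i, p`_i \in Q) /\ a * x ^+ n = (map_poly iota p).[x].

(* Main.v *)
Require Import Defs.
From HB Require Import structures.
From mathcomp Require Import all_boot all_order all_algebra ring_quotient.
Local Open Scope ring_scope.
Import GRing.Theory.

Lemma idP_add {R : comNzRingType} {P : {pred R}} : idealr_closed P ->
  forall u v, u \in P -> v \in P -> u + v \in P.
Proof. by case=> _ _ h u v hu hv; rewrite -[u]mul1r h. Qed.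

Lemma idP_mul {R : comNzRingType} {P : {pred R}} : idealr_closed P ->
  forall a u, u \in P -> a * u \in P.
Proof. by case=> h0 _ h a u hu; rewrite -[a * u]addr0 h. Qed.

Lemma idP_opp {R : comNzRingType} {P : {pred R}} : idealr_closed P ->
  forall u, u \in P -> - u \in P.
Proof. by move=> hI u hu; rewrite -mulN1r idP_mul. Qed.

Lemma idP_sub {R : comNzRingType} {P : {pred R}} : idealr_closed P ->
  forall u v, u \in P -> v \in P -> u - v \in P.
Proof. by move=> hI u v hu hv; rewrite idP_add // idP_opp. Qed.

Lemma idP_sum {R : comNzRingType} {P : {pred R}} : idealr_closed P ->
  forall m (F : nat -> R), (forall i, (i < m)%N -> F i \in P) ->
  \sum_(i < m) F i \in P.
Proof.
move=> hI m F hF; elim/big_rec: _ => [|i s _ hs]; first by case: hI.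
by rewrite idP_add // hF.
Qed.

Lemma idP_scale {k : fieldType} {R : comAlgType k} {P : {pred R}} :
  idealr_closed P -> forall (c : k) u, u \in P -> c *: u \in P.
Proof. by move=> hI c u hu; rewrite -[u]mul1r scalerAl idP_mul. Qed.

Lemma dbl0 {R : zmodType} (z : R) : z = z + z -> z = 0.
Proof. by move=> h; apply: (addrI z); rewrite -h addr0. Qed.

Lemma natr_scale (k : fieldType) (R : comAlgType k) (n : nat) :
  (n%:R : R) = (n%:R : k) *: 1.
Proof. by rewrite scaler_nat. Qed.

Lemma char0_ne0 {k : fieldType} : [pchar k] =i pred0 ->
  forall n, (0 < n)%N -> (n%:R : k) != 0.
Proof.
move=> h n hn; have /pcharf0P H : has_char0 k by [].
by rewrite H -lt0n.
Qed.

Theorem lemma1p2 (k : fieldType) (B A : comAlgType k)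
    (brB : B -> B -> B) (alpha : B -> B)
    (iota : {lrmorphism B -> A}) (x : A) (brA : A -> A -> A)
    (alpha_hat : A -> A) (s : k) :
  [pchar k] =i pred0 ->
  poisson_bracket brB ->
  poisson_derivation brB alpha ->
  poisson_laurent brB alpha iota x brA ->
  derivation alpha_hat ->
  (forall b : B, alpha_hat (iota b) = iota (alpha b)) ->
  s != 0 ->
  alpha_hat x = s *: x ->
  forall P : {pred A},
    poisson_prime brA P ->
    (forall a : A, a \in P -> alpha_hat a \in P) ->
    exists Q : {pred B}, poisson_prime brB Q /\ induced_from iota x P Q.
Proof.
move=> hk _ _ [[iinj [y xy] hsurj _] [bl br banti _ bleib] hbrB hbrx]
  [dlin dmul] hdi hs hdx P [[hI hprime] hpois] hPd.
have addP := idP_add hI; have mulP := idP_mul hI; have subP := idP_sub hI.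
have sumP := idP_sum hI; have scaleP := idP_scale hI.
have dD : forall a b, alpha_hat (a + b) = alpha_hat a + alpha_hat b.
  by move=> a b; have := dlin 1 a b; rewrite !scale1r.
have d0 : alpha_hat 0 = 0.
  by have h := dD 0 0; rewrite addr0 in h; apply: (addrI (alpha_hat 0)); rewrite -h addr0.
have bD : forall a b, brA x (a + b) = brA x a + brA x b.
  by move=> a b; have := br 1 a b x; rewrite !scale1r.
have b0 : brA x 0 = 0.
  by have h := bD 0 0; rewrite addr0 in h; apply: (addrI (brA x 0)); rewrite -h addr0.
have bxx : brA x x = 0.
  have h2 : (2%:R : k) != 0 by rewrite char0_ne0.
  have : (2%:R : k) *: brA x x = 0.
    by rewrite scaler_nat mulr2n {1}banti addNr.
  by move=> /eqP; rewrite scaler_eq0 (negbTE h2) /= => /eqP.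
have bxX : forall i, brA x (x ^+ i) = 0.
  elim=> [|i IH]; last by rewrite exprS bleib bxx IH !mulr0 mul0r addr0.
  have h := bleib x 1 1; rewrite !mulr1 !mul1r in h; rewrite expr0; exact: dbl0 h.
have dX : forall i, alpha_hat (x ^+ i) = (i%:R * s) *: x ^+ i.
  elim=> [|i IH].
    have h := dmul 1 1; rewrite !mulr1 !mul1r in h.
    by rewrite expr0 mul0r scale0r; exact: dbl0 h.
  rewrite exprS dmul IH hdx -scalerAl -scalerAr -scalerDl.
  by rewrite mulrSr mulrDl mul1r addrC.
have xyn : forall n, x ^+ n * y ^+ n = 1.
  by move=> n; rewrite -exprMn xy expr1n.
pose H (m : nat) (f : nat -> B) := \sum_(i < m) iota (f i) * x ^+ i.
have euler : forall m f, H m f \in P ->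
    H m (fun i => i%:R * f i) \in P.
  move=> m f hP.
  have e1 : alpha_hat (H m f) =
      \sum_(i < m) (iota (alpha (f i)) * x ^+ i
                    + s *: (iota (i%:R * f i) * x ^+ i)).
    rewrite /H (big_morph _ dD d0); apply: eq_bigr => i _.
    rewrite dmul hdi dX rmorphM rmorph_nat; congr (_ + _).
    rewrite -scalerAr mulrC -scalerA; congr (_ *: _).
    by rewrite scaler_nat -mulrA mulr_natl.
  have e2 : y * brA x (H m f) = \sum_(i < m) iota (alpha (f i)) * x ^+ i.
    rewrite /H (big_morph _ bD b0) mulr_sumr; apply: eq_bigr => i _.
    by rewrite bleib bxX mulr0 addr0 hbrx -mulrA mulrCA [y * (x * _)]mulrA
      (mulrC y) xy mul1r.
  have : alpha_hat (H m f) - y * brA x (H m f) \in P.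
    by rewrite subP // ?hPd // mulP // hpois.
  rewrite e1 e2 big_split /= addrAC subrr add0r -scaler_sumr => hh.
  by rewrite -[H _ _](scalerK hs) scaleP.
have main : forall m f, H m f \in P -> forall i, (i < m)%N -> iota (f i) \in P.
  elim=> [|m IH] f hP i; first by [].
  pose g j := (m%:R - j%:R) * f j.
  have hg : H m.+1 g \in P.
    have -> : H m.+1 g = m%:R * H m.+1 f - H m.+1 (fun j => j%:R * f j).
      rewrite /H mulr_sumr -sumrB; apply: eq_bigr => j _.
      by rewrite /g !rmorphM rmorphB !rmorph_nat mulrBl mulrBl mulrA.
    by rewrite subP // ?mulP // euler.
  have hgm : H m g \in P.
    by move: hg; rewrite /H big_ord_recr /= /g subrr mul0r rmorph0 mul0r addr0.
  have hlow : forall j, (j < m)%N -> iota (f j) \in P.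
    move=> j hj; have := IH g hgm j hj.
    rewrite /g rmorphM rmorphB !rmorph_nat -natrB 1?ltnW // natr_scale.
    have hc : ((m - j)%N%:R : k) != 0 by rewrite char0_ne0 // subn_gt0.
    rewrite -scalerAl mul1r => hh.
    by rewrite -[iota (f j)](scalerK hc) scaleP.
  have hHm : H m f \in P.
    by apply: (sumP m (fun j => iota (f j) * x ^+ j)) => j hj; rewrite mulrC mulP // hlow.
  have htop : iota (f m) * x ^+ m \in P.
    have := subP _ _ hP hHm.
    by rewrite /H big_ord_recr /= addrC addrK.
  rewrite ltnS leq_eqVlt => /orP [/eqP -> | hj]; last exact: hlow.
  by rewrite -[iota (f m)]mulr1 -(xyn m) mulrA mulrC mulP.
have Hpoly : forall p : {poly B}, (map_poly iota p).[x] = H (size p) (fun i => p`_i).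
  move=> p; rewrite horner_coef size_map_inj_poly ?rmorph0 //.
  by apply: eq_bigr => i _; rewrite coef_map.
pose Q : {pred B} := fun b => iota b \in P.
have inQ : forall b, (b \in Q) = (iota b \in P) by [].
exists Q; split.
  split; last by move=> a u; rewrite !inQ -hbrB; exact: hpois.
  split.
    split; first by rewrite inQ rmorph0; case: hI.
      by rewrite inQ rmorph1; case: hI.
    by move=> a u v; rewrite !inQ rmorphD rmorphM => hu hv; rewrite addP ?mulP.
  by move=> u v; rewrite !inQ rmorphM => /hprime.
move=> a; split.
  move=> ha; have [n [p hp]] := hsurj a; exists n, p; split => // i.
  have hpP : H (size p) (fun i => p`_i) \in P by rewrite -Hpoly -hp mulrC mulP.
  rewrite inQ; case: (ltnP i (size p)) => hi; first exact: main hpP i hi.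
  by rewrite nth_default // rmorph0; case: hI.
move=> [n [p [hq hp]]].
have : a * x ^+ n \in P.
  rewrite hp Hpoly.
  by apply: (sumP _ (fun j => iota p`_j * x ^+ j)) => i _; rewrite mulrC mulP // -inQ hq.
move=> hh; rewrite -[a]mulr1 -(xyn n) mulrA mulrC mulP //.
Qed.
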